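(* Let $(X,\varphi,G)$ be a dynamical system, $n\in\mathbb N$ and $x=(x_1,\dots,x_n)\in X^n$. If $x$ is an $n$-IN-tuple, then $x$ is an $n$-regionally proximal tuple. In particular, every $n$-IT-tuple is an $n$-regionally proximal tuple.
   Context: $G$ is an infinite countable group acting continuously (via $\varphi$) on a compact metric space $(X,d)$. For a tuple $(A_1,\dots,A_k)$ of subsets of $X$, a set $J\subseteq G$ is an independence set if for every nonempty finite $I\subseteq J$ and every $s:I\to\{1,\dots,k\}$ we have $\bigcap_{g\in I}\varphi^{g^{-1}}A_{s(g)}\neq\emptyset$. A tuple $(x_1,\dots,x_n)\in X^n$ is an $n$-IN-tuple (resp. $n$-IT-tuple) if for every product neighborhood $U_1\times\dots\times U_n$ of it, $(U_1,\dots,U_n)$ has arbitrarily large finite independence sets (resp. an infinite independence set). A tuple $(x_1,\dots,x_n)$ is $n$-regionally proximal if for every $\varepsilon>0$ there exist $x_1',\dots,x_n'\in X$ with $d(x_i,x_i')<\varepsilon$ for all $i$ and some $g\in G$ with $d(\varphi^g x_i',\varphi^g x_j')<\varepsilon$ for all $i,j$. *)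

(* Defs.v *)
From HB Require Import structures.
From mathcomp Require Import all_boot all_order all_algebra.
From mathcomp Require Import all_classical all_reals all_analysis.
Set Implicit Arguments. Unset Strict Implicit. Unset Printing Implicit Defensive.
Import Order.TTheory GRing.Theory Num.Theory.
Local Open Scope classical_set_scope.
Local Open Scope ring_scope.

Section Dyn.
Variables (R : realType) (G : groupType) (X : metricType R) (phi : G -> X -> X).

(* J \subseteq G is an independence set for the tuple A = (A_1,...,A_k):
   for every nonempty finite I \subseteq J and every s : I -> {1..k},
   \bigcap_{g in I} phi^{g^{-1}} A_{s(g)} is nonempty.
   (s is given as a function on all of G; only its values on I matter.) *)
Definition independence_set (k : nat) (A : 'I_k -> set X) (J : set G) : Prop :=
  forall I : set G, finite_set I -> I !=set0 -> I `<=` J ->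
  forall s : G -> 'I_k,
    (\bigcap_(g in I) (phi (g^-1)%g @` A (s g))) !=set0.

Definition IN_tuple (n : nat) (x : 'I_n -> X) : Prop :=
  forall U : 'I_n -> set X, (forall i, nbhs (x i) (U i)) ->
  forall m : nat, exists J : set G,
    [/\ finite_set J, (`I_m #<= J)%card & independence_set U J].

Definition IT_tuple (n : nat) (x : 'I_n -> X) : Prop :=
  forall U : 'I_n -> set X, (forall i, nbhs (x i) (U i)) ->
  exists J : set G, infinite_set J /\ independence_set U J.

Definition regionally_proximal (n : nat) (x : 'I_n -> X) : Prop :=
  forall eps : R, 0 < eps ->
  exists x' : 'I_n -> X,
    (forall i, mdist (x i) (x' i) < eps) /\
    exists g : G, forall i j, mdist (phi g (x' i)) (phi g (x' j)) < eps.

End Dyn.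

(* Main.v *)
Require Import Defs.
From HB Require Import structures.
From mathcomp Require Import all_boot all_order all_algebra.
From mathcomp Require Import all_classical all_reals all_analysis.
Import Order.TTheory GRing.Theory Num.Theory.
Local Open Scope classical_set_scope.
Local Open Scope ring_scope.

Local Open Scope nat_scope.
Lemma comb (M n : nat) (D : finType) (c : {ffun 'I_M -> 'I_n} -> D) :
  #|D| * (n.-1)^M < n^M -> exists d k, forall i : 'I_n, exists s, c s = d /\ s k = i.
Proof.
move=> H.
have [/existsP [d /existsP [k /forallP Hi]]|] :=
  boolP [exists d, exists k, [forall i, [exists s, (c s == d) && (s k == i)]]].
  exists d, k => i; have /existsP [s /andP[/eqP ? /eqP ?]] := Hi i; by exists s.
rewrite negb_exists => /forallP Hd; exfalso.
have Hm : forall dk : D * 'I_M, exists i, forall s, c s = dk.1 -> s dk.2 != i.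
  move=> [d k]; have := Hd d; rewrite negb_exists => /forallP /(_ k).
  rewrite negb_forall => /existsP [i]; rewrite negb_exists => /forallP Hs.
  by exists i => s /= csd; have := Hs s; rewrite csd eqxx.
have [m Hm'] := choice Hm.
have Hcl d : #|[pred s | c s == d]| <= (n.-1)^M.
  apply: leq_trans (subset_leq_card (_ : _ \subset family (fun k => predC1 (m (d, k))))) _.
    apply/fintype.subsetP => s; rewrite inE => /eqP csd; apply/familyP => k; rewrite inE.
    exact: (Hm' (d, k) s csd).
  rewrite card_family /image_mem.
  rewrite (eq_map (g := fun _ => n.-1)); last by move=> k; rewrite cardC1 card_ord.
  suff E : forall e : seq 'I_M, foldr muln 1 (map (fun _ => n.-1) e) = n.-1 ^ size e.
    by rewrite E size_enum_ord.
  by elim => //= _ e ->; rewrite expnS.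
have : n ^ M <= #|D| * (n.-1)^M.
  have -> : n ^ M = #|{ffun 'I_M -> 'I_n}| by rewrite card_ffun !card_ord.
  rewrite -sum1_card (partition_big c xpredT) //=.
  rewrite -sum_nat_const; apply: leq_sum => d _.
  rewrite sum1_card; apply: leq_trans (Hcl d).
  by apply: subset_leq_card; apply/fintype.subsetP => s; rewrite !inE.
by rewrite leqNgt H.
Qed.

From mathcomp Require Import zify.

Lemma powbound_aux (a M : nat) : a ^ M * (M + a) <= a * a.+1 ^ M.
Proof.
elim: M => [|M IH]; first by rewrite !expn0 mul1n muln1 add0n.
rewrite !expnS. nia.
Qed.
Lemma powbound (a N : nat) : exists M, N * a ^ M < a.+1 ^ M.
Proof.
case: a => [|a]. exists 1; by rewrite exp0n // muln0 expn1.
exists (N * a.+1 + 1). have := powbound_aux a.+1 (N * a.+1 + 1).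
have : 0 < a.+1 ^ (N * a.+1 + 1) by rewrite expn_gt0.
set p := a.+1 ^ _; set q := a.+2 ^ _. nia.
Qed.

Local Open Scope ring_scope.
Definition pX (R : realType) (X : metricType R) (x0 : X) : Type := X.
HB.instance Definition _ (R : realType) (X : metricType R) (x0 : X) :=
  Topological.copy (@pX R X x0) X.
HB.instance Definition _ (R : realType) (X : metricType R) (x0 : X) :=
  isPointed.Build (@pX R X x0) x0.
Lemma cc (R : realType) (X : metricType R) (x0 : X) : compact [set: X] -> @cover_compact (@pX R X x0) [set: @pX R X x0].
Proof. move=> h. rewrite -compact_cover. exact: h. Qed.

Lemma inj_of_card (T : Type) M (J : set T) : (`I_M #<= J)%card ->
  exists f : 'I_M -> T, injective f /\ forall k, J (f k).
Proof.
move/card_leP => [f].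
pose g (k : 'I_M) : T := val (f (@exist _ _ (nat_of_ord k) (mem_set (ltn_ord k)))).
exists g; split; last by move=> k; rewrite /g; case: (f _) => /= v; rewrite inE.
move=> k1 k2 /val_inj /(@inj _ _ _ f) => /(_ (in_setT _) (in_setT _)) [] /val_inj.
done.
Qed.

Module Aux.
Import finmap.
Lemma main_lemma (R : realType) (G : groupType) (X : metricType R) (phi : G -> X -> X)
  (X_compact : compact [set: X])
  (phi_one : forall y : X, phi 1%g y = y)
  (phi_mul : forall (g h : G) (y : X), phi (g * h)%g y = phi g (phi h y))
  (n : nat) (x : 'I_n -> X)
  (H : forall U : 'I_n -> set X, (forall i, nbhs (x i) (U i)) ->
     forall M, exists J, (`I_M #<= J)%card /\ independence_set phi U J) :
  regionally_proximal phi x.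
Proof.
have phiK g y : phi g (phi (g^-1)%g y) = y by rewrite -phi_mul mulgV phi_one.
have phiKV g y : phi (g^-1)%g (phi g y) = y by rewrite -phi_mul mulVg phi_one.
move=> eps eps0.
case: n x H => [|n] x H.
  by exists x; split => [[]//|]; exists 1%g => -[].
pose r := eps / 2.
have r0 : 0 < r by rewrite divr_gt0.
have := @cc R X (x ord0) X_compact => /(_ X setT (fun c : X => interior (ball c r))).
case.
- by move=> c _; apply: open_interior.
- move=> y _; exists y => //; exact: nbhsx_ballx.
move=> D' _ Dcov.
have Dc y : exists d : finmap.fset_sub_type D', ball (finmap.fsval d) r y.
  have [c /= cD /interior_subset yc] := Dcov y I.
  by exists (finmap.FSetSub cD).
have [d0 _] := Dc (x ord0).
have [M HM] := powbound n #|finmap.fset_sub_type D'|.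
have M0 : (0 < M)%N.
  case: M HM => // ; rewrite !expn0 muln1 ltnS leqn0 => /eqP/card0_eq/(_ d0).
  by rewrite inE.
have [J [JM Jind]] := H (fun i => ball (x i) eps) (fun i => @nbhsx_ballx _ _ (x i) eps eps0) M.
have [f [finj fJ]] := @inj_of_card _ _ _ JM.
pose sG (s : {ffun 'I_M -> 'I_n.+1}) (g : G) : 'I_n.+1 :=
  match pselect (exists k, f k = g) with
  | left e => s (projT1 (cid e)) | right _ => ord0 end.
have sGE s k : sG s (f k) = s k.
  rewrite /sG; case: pselect => [e|/(_ (ex_intro _ k erefl))//].
  by case: cid => k' /= /finj ->.
have Hy (s : {ffun 'I_M -> 'I_n.+1}) : exists y, forall k, ball (x (s k)) eps (phi (f k) y).
  have := Jind (range f) (finite_image _ finite_finset) _ _ (sG s).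
  case.
  - by exists (f (Ordinal M0)), (Ordinal M0).
  - by move=> g [k _ <-]; apply: fJ.
  move=> y Hy; exists y => k.
  have [u] := Hy (f k) (ex_intro2 _ _ k I erefl).
  by rewrite sGE => Hu <-; rewrite phiK.
have [y Hy'] := choice Hy.
have [c Hc] := choice (fun s => Dc (y s)).
have [d [k Hi]] := @comb _ _ _ c HM.
have [sel Hsel] := choice Hi.
exists (fun i => phi (f k) (y (sel i))); split.
  move=> i; have := Hy' (sel i) k; rewrite (proj2 (Hsel i)).
  by rewrite ballEmdist.
exists (f k)^-1%g => i j; rewrite !phiKV.
have := Hc (sel i); have := Hc (sel j).
rewrite !(proj1 (Hsel _)) !ballEmdist /= => hj hi.
rewrite (le_lt_trans (metric_triangle _ (finmap.fsval d) _)) //.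
by rewrite metric_sym (splitr eps) ltrD.
Qed.

End Aux.

Theorem proposition2p6
  (R : realType) (G : groupType) (X : metricType R) (phi : G -> X -> X)
  (G_countable : countable [set: G]) (G_infinite : infinite_set [set: G])
  (X_compact : compact [set: X])
  (phi_one : forall y : X, phi 1%g y = y)
  (phi_mul : forall (g h : G) (y : X), phi (g * h)%g y = phi g (phi h y))
  (phi_cont : forall g : G, continuous (phi g))
  (n : nat) (x : 'I_n -> X) :
  (IN_tuple phi x -> regionally_proximal phi x) /\
  (IT_tuple phi x -> regionally_proximal phi x).
Proof.
split => HT; apply: (@Aux.main_lemma R G X phi X_compact phi_one phi_mul n x) => U HU M.
  by have [J [_ ? ?]] := HT U HU M; exists J.
have [J [Jinf Jind]] := HT U HU; exists J; split => //.
apply: (card_le_trans (B := [set: nat])); first exact: subset_card_le.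
by apply/infiniteP.
Qed.
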